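(* Let $G$ be a graph and $uv\in E(G)$. Let $W_1=N(u)\setminus N[v]$, $W_2=N(u)\cap N(v)$, $W_3=N(v)\setminus N[u]$ and $W_4=V(G)\setminus (N[u]\cup N[v])$. Suppose there is no maximal induced matching $M$ of $G$ with $V(M)\subseteq W_1\cup W_4$ and $V(M)\cap W_1\ne\emptyset$, and there is no maximal induced matching $M$ of $G$ with $V(M)\subseteq W_3\cup W_4$ and $V(M)\cap W_3\neq\emptyset$. Then $|M_{G_{T_G(u)\to v}}|\ge |M_G|$ or $|M_{G_{T_G(v)\to u}}|\ge |M_G|$.
   Context: Graphs are finite, simple, undirected. $N(x)$, $N[x]$ are the open and closed neighborhoods. An induced matching is a matching whose endpoints induce a $1$-regular subgraph; it is maximal if not properly contained in another induced matching; $M_G$ is the set of maximal induced matchings of $G$; $V(M)$ is the set of vertices covered by $M$. For a vertex $v$, $T_G(v)=\{w\in V(G): N_G[w]=N_G[v]\}$ (the twin set of $v$). For $uv\in E(G)$, making $v$ into a twin of $u$ means deleting the edge $vx$ for every $x\in N(v)\setminus N[u]$ and adding the edge $vy$ for every $y\in N(u)\setminus N[v]$. $G_{T_G(v)\to u}$ is the graph obtained from $G$ by making each vertex of $T_G(v)$ into a twin of $u$; $G_{T_G(u)\to v}$ is defined symmetrically. *)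

(* Defs.v *)
(* A finite simple graph on a finType T is a symmetric,
   irreflexive boolean relation e : rel T. *)
From mathcomp Require Import all_boot.
Set Implicit Arguments. Unset Strict Implicit. Unset Printing Implicit Defensive.

Section Graph.
Variable T : finType.

Definition nbh (e : rel T) (x : T) : {set T} := [set y | e x y].
Definition cnbh (e : rel T) (x : T) : {set T} := x |: nbh e x.

Definition is_edge_set (e : rel T) (m : {set T}) : bool :=
  [exists x, exists y, e x y && (m == [set x; y])].

(* M (a set of edges) is an induced matching: M is a matching (its edges are
   pairwise disjoint) and the subgraph induced by V(M) = cover M is 1-regular *)
Definition induced_matching (e : rel T) (M : {set {set T}}) : bool :=
  [&& [forall m in M, is_edge_set e m], trivIset M &
      [forall x in cover M, #|nbh e x :&: cover M| == 1]].

Definition maximal_induced_matching (e : rel T) (M : {set {set T}}) : bool :=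
  induced_matching e M &&
  [forall M' : {set {set T}}, (induced_matching e M' && (M \subset M')) ==> (M' == M)].

Definition MIM (e : rel T) : {set {set {set T}}} :=
  [set M | maximal_induced_matching e M].

Definition twins (e : rel T) (v : T) : {set T} := [set w | cnbh e w == cnbh e v].

Definition make_twin (e : rel T) (w u : T) : rel T :=
  let f y := if y \in nbh e w :\: cnbh e u then false
             else if y \in nbh e u :\: cnbh e w then true
             else e w y in
  fun x y => if x == w then f y else if y == w then f x else e x y.

Definition twin_to (e : rel T) (S : {set T}) (u : T) : rel T :=
  foldl (fun r w => make_twin r w u) e (enum S).

End Graph.

(* Main.v *)
Require Import Defs.
From mathcomp Require Import all_boot all_algebra zify ring.
From Stdlib Require Import FunctionalExtensionality.
Set Implicit Arguments. Unset Strict Implicit. Unset Printing Implicit Defensive.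

Lemma bin2_mul n : 'C(n, 2) * 2 = n * n.-1.
Proof.
elim: n => [|n IH] //; rewrite binS bin1 mulnDl IH.
case: n {IH} => [|n] //=; lia.
Qed.

Lemma core a b g g1 g2 z00 z10 z20 z01 z02 z11 y0 y1 y2 x0 x1 x2 CA CB CAB :
 CA * 2 = a.+1 * a -> CB * 2 = b.+1 * b -> CAB * 2 = (a.+1 + b.+1) * (a + b.+1) ->
 g <= z00 + a.+1*z10 + CA*z20 + b.+1*z01 + CB*z02 + a.+1*b.+1*z11 ->
 y0 + (a.+1+b.+1)*y1 + CAB*y2 <= g1 -> z00 <= y0 -> z01 <= y1 -> z02 <= y2 -> z11 <= y2 ->
 x0 + (a.+1+b.+1)*x1 + CAB*x2 <= g2 -> z00 <= x0 -> z10 <= x1 -> z20 <= x2 -> z11 <= x2 ->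
 (a.+1 + b.+1) * g * 2 <= (b.+1 * g1 + a.+1 * g2) * 2.
Proof.
move=> ca cb cab hg hg1 h0 h1 h2 h3 hg2 k0 k1 k2 k3.
set A := a.+1; set B := b.+1.
have e1 : B * (y0 + (A + B) * y1 + CAB * y2) * 2 <= B * g1 * 2.
  by rewrite leq_mul2r leq_mul2l hg1 !orbT.
have e2 : A * (x0 + (A + B) * x1 + CAB * x2) * 2 <= A * g2 * 2.
  by rewrite leq_mul2r leq_mul2l hg2 !orbT.
have e3 : (A + B) * g * 2 <= (A + B) * (z00 + A*z10 + CA*z20 + B*z01 + CB*z02 + A*B*z11) * 2.
  by rewrite leq_mul2r leq_mul2l hg !orbT.
have q : A*a*z20 + B*b*z02 + 2*(A*B*z11) <= B*(a+B)*y2 + A*(a+B)*x2.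
  have -> : B*(a+B)*y2 = B*b*y2 + A*B*y2 by rewrite /A /B; ring.
  have -> : A*(a+B)*x2 = A*a*x2 + A*B*x2 by rewrite /A /B; ring.
  have r1 := leq_mul (leqnn (A*a)) k2.
  have r2 := leq_mul (leqnn (B*b)) h2.
  have r3 := leq_mul (leqnn (A*B)) h3.
  have r4 := leq_mul (leqnn (A*B)) k3.
  lia.
have q' := leq_mul (leqnn (A + B)) q.
have p0 := leq_mul (leqnn (A + B)) h0.
have p0' := leq_mul (leqnn A) k0.
have p1 := leq_mul (leqnn (A * (A + B))) k1.
have p2 := leq_mul (leqnn (B * (A + B))) h1.
have f1 : B * (CAB * y2) * 2 = B * (A + B) * (a + B) * y2.
  have -> : B * (CAB * y2) * 2 = B * (CAB * 2) * y2 by ring.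
  by rewrite cab !mulnA.
have f2 : A * (CAB * x2) * 2 = A * (A + B) * (a + B) * x2.
  have -> : A * (CAB * x2) * 2 = A * (CAB * 2) * x2 by ring.
  by rewrite cab !mulnA.
have g1' : (A + B) * (CA * z20) * 2 = (A + B) * (A * a) * z20.
  have -> : (A + B) * (CA * z20) * 2 = (A + B) * (CA * 2) * z20 by ring.
  by rewrite ca !mulnA.
have g2' : (A + B) * (CB * z02) * 2 = (A + B) * (B * b) * z02.
  have -> : (A + B) * (CB * z02) * 2 = (A + B) * (CB * 2) * z02 by ring.
  by rewrite cb !mulnA.
clearbody A B.
have L : (A + B) * (z00 + A*z10 + CA*z20 + B*z01 + CB*z02 + A*B*z11) * 2 =
   (A+B)*z00*2 + A*(A+B)*z10*2 + B*(A+B)*z01*2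
   + ((A+B)*(CA*z20)*2 + (A+B)*(CB*z02)*2 + (A+B)*(A*B*z11)*2) by ring.
rewrite g1' g2' in L.
have L2 : (A+B)*(A*a)*z20 + (A+B)*(B*b)*z02 + (A+B)*(A*B*z11)*2 =
   (A+B)*(A*a*z20 + B*b*z02 + 2*(A*B*z11)) by ring.
have R : B * (y0 + (A + B) * y1 + CAB * y2) * 2 + A * (x0 + (A + B) * x1 + CAB * x2) * 2
  = (B*y0*2 + A*x0*2) + A*(A+B)*x1*2 + B*(A+B)*y1*2 + (B * (CAB * y2) * 2 + A * (CAB * x2) * 2) by ring.
rewrite f1 f2 in R.
have R2 : B * (A + B) * (a + B) * y2 + A * (A + B) * (a + B) * x2 =
   (A + B) * (B * (a + B) * y2 + A * (a + B) * x2) by ring.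
apply: (leq_trans e3); rewrite L L2 [(B * g1 + _) * 2]mulnDl.
apply: (leq_trans _ (leq_add e1 e2)); rewrite R R2.
apply: leq_add; last exact: q'.
apply: leq_add; last by rewrite leq_mul2r leq_mul2l h1 !orbT.
apply: leq_add; last by rewrite leq_mul2r leq_mul2l k1 !orbT.
rewrite !mulnDl addnC; apply: leq_add; rewrite leq_mul2r leq_mul2l ?h0 ?k0 !orbT //.
Qed.


Lemma arith a b g g1 g2 z00 z10 z20 z01 z02 z11 y0 y1 y2 x0 x1 x2 :
 0 < a -> 0 < b ->
 g <= z00 + a*z10 + 'C(a,2)*z20 + b*z01 + 'C(b,2)*z02 + a*b*z11 ->
 y0 + (a+b)*y1 + 'C(a+b,2)*y2 <= g1 -> z00 <= y0 -> z01 <= y1 -> z02 <= y2 -> z11 <= y2 ->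
 x0 + (a+b)*x1 + 'C(a+b,2)*x2 <= g2 -> z00 <= x0 -> z10 <= x1 -> z20 <= x2 -> z11 <= x2 ->
 g <= g1 \/ g <= g2.
Proof.
case: a => [//|a] _; case: b => [//|b] _ => hg hg1 h0 h1 h2 h3 hg2 k0 k1 k2 k3.
have ca : 'C(a.+1, 2) * 2 = a.+1 * a by rewrite bin2_mul.
have cb : 'C(b.+1, 2) * 2 = b.+1 * b by rewrite bin2_mul.
have cab : 'C(a.+1 + b.+1, 2) * 2 = (a.+1 + b.+1) * (a + b.+1) by rewrite bin2_mul addSn.
have key : (a.+1 + b.+1) * g * 2 <= (b.+1 * g1 + a.+1 * g2) * 2.
  exact: (@core a b g g1 g2 z00 z10 z20 z01 z02 z11 y0 y1 y2 x0 x1 x2 _ _ _ ca cb cab hg hg1 h0 h1 h2 h3 hg2 k0 k1 k2 k3).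
rewrite leq_mul2r /= in key.
case: (leqP g g1) => [|l1]; first by left.
case: (leqP g g2) => [|l2]; first by right.
have t1 : b.+1 * g1 < b.+1 * g by rewrite ltn_pmul2l.
have t2 : a.+1 * g2 < a.+1 * g by rewrite ltn_pmul2l.
move: key; rewrite mulnDl; lia.
Qed.

Section Basic.
Variable T : finType.

Definition oneReg (e : rel T) (S : {set T}) :=
  [forall x in S, #|nbh e x :&: S| == 1].
Definition cl (e : rel T) (S : {set T}) : {set T} :=
  [set y | [exists x in S, (x == y) || e x y]].
Definition maxl (e : rel T) (S : {set T}) :=
  [forall x, forall y, e x y ==> (x \in cl e S) || (y \in cl e S)].
Definition mimv (e : rel T) (S : {set T}) := oneReg e S && maxl e S.
Definition MIMV (e : rel T) : {set {set T}} := [set S | mimv e S].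
Definition edges_in (e : rel T) (S : {set T}) : {set {set T}} :=
  [set m : {set T} | (m \subset S) && is_edge_set e m].

Variable e : rel T.
Hypothesis esym : symmetric e.
Hypothesis eirr : irreflexive e.
Implicit Types (S : {set T}) (x y z : T).

Lemma oneReg_uniq S x y z : oneReg e S -> x \in S -> y \in S -> z \in S ->
  e x y -> e x z -> y = z.
Proof.
move=> /forall_inP H xS yS zS exy exz.
have /cards1P [w Hw] := H x xS.
have : y \in nbh e x :&: S by rewrite !inE exy yS.
have : z \in nbh e x :&: S by rewrite !inE exz zS.
by rewrite Hw !inE => /eqP -> /eqP ->.
Qed.

Lemma oneReg_ex S x : oneReg e S -> x \in S -> exists2 y, y \in S & e x y.
Proof.
move=> /forall_inP H xS.
have /cards1P [w Hw] := H x xS.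
have : w \in nbh e x :&: S by rewrite Hw set11.
by rewrite !inE => /andP [h1 h2]; exists w.
Qed.

Lemma oneRegP (S : {set T}) : reflect (forall x, x \in S -> exists2 y, y \in S & 
   (e x y /\ forall z, z \in S -> e x z -> z = y)) (oneReg e S).
Proof.
apply: (iffP idP).
  move=> H x xS; have [y yS exy] := oneReg_ex H xS.
  exists y => //; split => // z zS exz; exact: (oneReg_uniq H xS zS yS).
move=> H; apply/forall_inP => x xS; have [y yS [exy U]] := H x xS.
apply/cards1P; exists y; apply/setP => z; rewrite !inE.
apply/idP/idP; first by move=> /andP [h1 h2]; rewrite (U z h2 h1).
by move=> /eqP ->; rewrite exy yS.
Qed.

Lemma in_cl S y : (y \in cl e S) = [exists x in S, (x == y) || e x y].
Proof. by rewrite inE. Qed.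

Lemma cl_mem S y : y \in S -> y \in cl e S.
Proof. by move=> yS; rewrite in_cl; apply/existsP; exists y; rewrite yS eqxx. Qed.

Lemma cl_adj S x y : x \in S -> e x y -> y \in cl e S.
Proof. by move=> xS exy; rewrite in_cl; apply/existsP; exists x; rewrite xS exy orbT. Qed.

Lemma not_clP (S : {set T}) y : reflect (y \notin S /\ forall x, x \in S -> ~~ e x y) (y \notin cl e S).
Proof.
apply: (iffP idP).
  move=> H; split; first by apply: contra H; apply: cl_mem.
  by move=> x xS; apply: contra H; apply: cl_adj.
move=> [yS H]; apply/negP; rewrite in_cl => /existsP [x /andP [xS /orP [/eqP exy|exy]]].
  by subst; rewrite xS in yS.
by move: (H x xS); rewrite exy.
Qed.

Lemma maxlP (S : {set T}) : reflect (forall x y, e x y -> x \notin cl e S -> y \notin cl e S -> False)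
  (maxl e S).
Proof.
apply: (iffP idP).
  move=> /forallP H x y exy hx hy; move: (forallP (H x) y); rewrite exy /=.
  by rewrite (negbTE hx) (negbTE hy).
move=> H; apply/forallP => x; apply/forallP => y; apply/implyP => exy.
case hx: (x \in cl e S) => //; case hy: (y \in cl e S) => //.
by case: (H x y exy); rewrite ?hx ?hy.
Qed.

Lemma oneReg_add S x y : oneReg e S -> e x y -> x \notin cl e S -> y \notin cl e S ->
  oneReg e (x |: (y |: S)).
Proof.
move=> /oneRegP H exy /not_clP [xS hx] /not_clP [yS hy].
have nxy : x != y by apply: contraTneq exy => ->; rewrite eirr.
apply/oneRegP => z; rewrite !inE => /orP [/eqP ->|/orP [/eqP ->|zS]].
- exists y; first by rewrite !inE eqxx orbT.
  split => // w; rewrite !inE => /orP [/eqP ->|/orP [/eqP -> //|wS]]; first by rewrite eirr.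
  by move=> exw; move: (hx w wS); rewrite esym exw.
- exists x; first by rewrite !inE eqxx.
  split; first by rewrite esym.
  move=> w; rewrite !inE => /orP [/eqP -> //|/orP [/eqP ->|wS]]; first by rewrite eirr.
  by move=> eyw; move: (hy w wS); rewrite esym eyw.
- have [w wS [ezw U]] := H z zS; exists w; first by rewrite !inE wS !orbT.
  split => // t; rewrite !inE => /orP [/eqP ->|/orP [/eqP ->|tS]].
  + by move=> ezx; move: (hx z zS); rewrite ezx.
  + by move=> ezy; move: (hy z zS); rewrite ezy.
  + exact: U.
Qed.

Lemma edge_inP S m : oneReg e S -> m \in edges_in e S -> forall z, z \in m ->
  exists2 w, e z w & m = [set z; w].
Proof.
move=> H; rewrite inE => /andP [mS /existsP [x /existsP [y /andP [exy /eqP ->]]]] z.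
rewrite !inE => /orP [/eqP ->|/eqP ->]; first by exists y.
by exists x; [rewrite esym | rewrite setUC].
Qed.

Lemma edges_in_sub S m : m \in edges_in e S -> m \subset S.
Proof. by rewrite inE => /andP []. Qed.

Lemma cover_edges S : oneReg e S -> cover (edges_in e S) = S.
Proof.
move=> H; apply/setP => x; apply/bigcupP/idP.
  by move=> [m mE xm]; exact: (subsetP (edges_in_sub mE)).
move=> xS; have [y yS exy] := oneReg_ex H xS.
exists [set x; y]; last by rewrite !inE eqxx.
rewrite inE; apply/andP; split.
  by apply/subsetP => z; rewrite !inE => /orP [] /eqP ->.
by apply/existsP; exists x; apply/existsP; exists y; rewrite exy eqxx.
Qed.

Lemma im_edges S : oneReg e S -> induced_matching e (edges_in e S).
Proof.
move=> H; apply/and3P; split.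
- by apply/forall_inP => m; rewrite inE => /andP [].
- apply/trivIsetP => m1 m2 m1E m2E ne; apply/pred0P => z /=.
  apply/negP => /andP [z1 z2].
  have [w1 e1 d1] := edge_inP H m1E z1.
  have [w2 e2 d2] := edge_inP H m2E z2.
  have zS : z \in S by exact: (subsetP (edges_in_sub m1E)).
  have w1S : w1 \in S by apply: (subsetP (edges_in_sub m1E)); rewrite d1 !inE eqxx orbT.
  have w2S : w2 \in S by apply: (subsetP (edges_in_sub m2E)); rewrite d2 !inE eqxx orbT.
  move: ne; rewrite d1 d2 (oneReg_uniq H zS w1S w2S e1 e2) eqxx //.
- by rewrite cover_edges.
Qed.

Lemma im_oneReg M : induced_matching e M -> oneReg e (cover M).
Proof. by move=> /and3P []. Qed.

Lemma im_cover_eq M : induced_matching e M -> M = edges_in e (cover M).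
Proof.
move=> H; have R := im_oneReg H; move: H => /and3P [/forall_inP He _ _].
apply/setP => m; rewrite inE; apply/idP/idP.
  move=> mM; rewrite He // andbT; exact: bigcup_sup.
move=> /andP [mC /existsP [x /existsP [y /andP [exy /eqP dm]]]].
have xC : x \in cover M by apply: (subsetP mC); rewrite dm !inE eqxx.
have yC : y \in cover M by apply: (subsetP mC); rewrite dm !inE eqxx orbT.
move: (xC) => /bigcupP [m' m'M xm'].
have := He m' m'M => /existsP [p /existsP [q /andP [epq /eqP dm']]].
have pC : p \in cover M by apply/bigcupP; exists m'; rewrite // dm' !inE eqxx.
have qC : q \in cover M by apply/bigcupP; exists m'; rewrite // dm' !inE eqxx orbT.
move: xm'; rewrite dm' !inE => /orP [/eqP xp|/eqP xq].
  subst p; have := oneReg_uniq R xC yC qC exy epq => eyq.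
  by rewrite dm eyq -dm'.
subst q; have := oneReg_uniq R xC yC pC exy; rewrite esym => /(_ epq) eyp.
by rewrite dm eyp setUC -dm'.
Qed.

Lemma edges_in_mono S S' : S \subset S' -> edges_in e S \subset edges_in e S'.
Proof.
move=> sub; apply/subsetP => m; rewrite !inE => /andP [h1 ->]; rewrite andbT.
exact: subset_trans sub.
Qed.

Lemma cover_mono (M M' : {set {set T}}) : M \subset M' -> cover M \subset cover M'.
Proof.
move=> sub; apply/subsetP => x /bigcupP [m mM xm]; apply/bigcupP; exists m => //.
exact: (subsetP sub).
Qed.

Lemma outside_not_cl S S' z : oneReg e S -> oneReg e S' -> S \subset S' ->
  z \in S' -> z \notin S -> z \notin cl e S.
Proof.
move=> H H' sub zS' zS; apply/not_clP; split => // s sS; apply/negP => esz.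
have [t tS est] := oneReg_ex H sS.
have := oneReg_uniq H' (subsetP sub s sS) zS' (subsetP sub t tS) esz est.
by move=> ezt; subst; rewrite tS in zS.
Qed.

Lemma mim_iff M : maximal_induced_matching e M = induced_matching e M && maxl e (cover M).
Proof.
apply/idP/idP.
  move=> /andP [H /forallP Hmax]; rewrite H /=.
  have R := im_oneReg H.
  apply/maxlP => x y exy hx hy.
  set S := cover M.
  have R' := oneReg_add R exy hx hy.
  have := Hmax (edges_in e (x |: (y |: S))); rewrite im_edges //=.
  rewrite {1}(im_cover_eq H) edges_in_mono /=; last by apply/subsetP => z zS; rewrite !inE zS !orbT.
  move=> /eqP E.
  have : cover (edges_in e (x |: (y |: S))) = S by rewrite E.
  rewrite cover_edges // => E2.
  have : x \in S by rewrite -E2 !inE eqxx.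
  by move/cl_mem; rewrite (negbTE hx).
move=> /andP [H /maxlP Hm]; rewrite /maximal_induced_matching H /=.
apply/forallP => M'; apply/implyP => /andP [H' sub].
have R := im_oneReg H; have R' := im_oneReg H'.
have sub' := cover_mono sub.
suff E : cover M' = cover M by apply/eqP; rewrite (im_cover_eq H') E -(im_cover_eq H).
apply/eqP; rewrite eqEsubset sub' andbT; apply/subsetP => z zC'.
case zC: (z \in cover M) => //; exfalso.
have hz := outside_not_cl R R' sub' zC' (negbT zC).
have [w wC' ezw] := oneReg_ex R' zC'.
have wC : w \notin cover M.
  apply/negP => wC; move/not_clP: hz => [_ h]; by move: (h w wC); rewrite esym ezw.
have hw := outside_not_cl R R' sub' wC' wC.
exact: (Hm z w ezw hz hw).
Qed.

Lemma MIM_MIMV : #|MIM e| = #|MIMV e|.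
Proof.
have -> : MIMV e = [set cover M | M in MIM e].
  apply/setP => S; rewrite inE; apply/idP/imsetP.
    move=> /andP [R Hm]; exists (edges_in e S); last by rewrite cover_edges.
    by rewrite inE mim_iff im_edges // cover_edges // Hm.
  move=> [M]; rewrite inE mim_iff => /andP [H Hm] ->.
  by rewrite /mimv Hm im_oneReg.
rewrite card_in_imset // => M1 M2; rewrite !inE !mim_iff => /andP [H1 _] /andP [H2 _] E.
by rewrite (im_cover_eq H1) (im_cover_eq H2) E.
Qed.

Lemma MIMV_MIM S : S \in MIMV e -> exists2 M, M \in MIM e & cover M = S.
Proof.
rewrite inE => /andP [R Hm]; exists (edges_in e S); last by rewrite cover_edges.
by rewrite inE mim_iff im_edges // cover_edges // Hm.
Qed.

End Basic.

Section Swap.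
Variable T : finType.
Implicit Types (S P C D : {set T}) (x y z : T).

Definition sw x y z := if z == x then y else if z == y then x else z.

Lemma swK x y : involutive (sw x y).
Proof.
move=> z; rewrite /sw.
case: (z =P x) => [->|zx]; first by rewrite eqxx; case: (y =P x) => [->|].
case: (z =P y) => [->|zy]; first by rewrite eqxx.
by move/eqP/negbTE: zx => ->; move/eqP/negbTE: zy => ->.
Qed.

Lemma cl_pre (e : rel T) (f : T -> T) (finv : involutive f)
  (hf : forall a b, e (f a) (f b) = e a b) S y :
  (y \in cl e (f @^-1: S)) = (f y \in cl e S).
Proof.
rewrite !in_cl; apply/existsP/existsP; case=> x.
  rewrite inE => /andP [fxS H]; exists (f x); rewrite fxS /=.
  by rewrite hf (inj_eq (inv_inj finv)).
move=> /andP [xS H]; exists (f x); rewrite inE finv xS /=.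
by rewrite -(inj_eq (inv_inj finv)) finv -hf finv.
Qed.

Lemma auto_mimv (e : rel T) (f : T -> T) (finv : involutive f)
  (hf : forall a b, e (f a) (f b) = e a b) S :
  mimv e S -> mimv e (f @: S).
Proof.
rewrite (can2_imset_pre _ finv finv) => /andP [/forall_inP R /maxlP M].
apply/andP; split.
  apply/forall_inP => x; rewrite inE => fxS.
  have <- : #|f @^-1: (nbh e (f x) :&: S)| = #|nbh e x :&: f @^-1: S|.
    by apply: eq_card => z; rewrite !inE hf.
  by rewrite card_preimset ?R //; exact: inv_inj.
apply/maxlP => a b eab; rewrite !cl_pre // => ha hb.
by apply: (M (f a) (f b)); rewrite ?hf.
Qed.

Variable e : rel T.
Hypothesis esym : symmetric e.
Hypothesis eirr : irreflexive e.

Lemma twin_adj x y z : cnbh e x = cnbh e y -> z != x -> z != y -> e x z = e y z.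
Proof.
move=> E zx zy; have : (z \in cnbh e x) = (z \in cnbh e y) by rewrite E.
by rewrite !inE (negbTE zx) (negbTE zy).
Qed.

Lemma sw_auto x y : cnbh e x = cnbh e y -> forall a b, e (sw x y a) (sw x y b) = e a b.
Proof.
move=> E a b; rewrite /sw.
have K : forall z, z != x -> z != y -> e x z = e y z by move=> z; apply: twin_adj.
case: (a =P x) => [->|/eqP ax]; case: (b =P x) => [->|/eqP bx]; rewrite ?eqxx.
all: try (case: (b =P y) => [->|/eqP by_]).
all: try (case: (a =P y) => [->|/eqP ay]).
all: rewrite ?eqxx ?eirr //.
all: first [by rewrite K | by rewrite -K | by rewrite (esym a y) (esym a x) K
           | by rewrite (esym a y) (esym a x) -K].
Qed.

Lemma class_swap C (hC : forall x y, x \in C -> y \in C -> cnbh e x = cnbh e y) :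
  forall n S P, #|P :\: S| = n -> P \subset C -> #|P| = #|S :&: C| ->
  mimv e S -> mimv e ((S :\: C) :|: P).
Proof.
elim=> [|n IH] S P.
  move/eqP; rewrite cards_eq0 setD_eq0 => PS PC cP H.
  have PSC : P \subset S :&: C by rewrite subsetI PS PC.
  have -> : P = S :&: C by apply/eqP; rewrite eqEcard PSC cP leqnn.
  by rewrite setUC setID.
move=> cPS PC cP H.
have [y yP] : exists y, y \in P :\: S by apply/set0Pn; rewrite -card_gt0 cPS.
have [x xSC] : exists x, x \in (S :&: C) :\: P.
  apply/set0Pn; apply/negP; rewrite setD_eq0 => SCP.
  have E : S :&: C = P by apply/eqP; rewrite eqEcard SCP cP leqnn.
  by move: yP; rewrite -E !inE => /andP [/negbTE ->].
move: yP xSC; rewrite !inE => /andP [yS yP] /andP [xP /andP [xS xC]].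
have yC : y \in C by apply: (subsetP PC).
have E := hC x y xC yC.
set S1 := sw x y @: S.
have H1 : mimv e S1.
  exact: (auto_mimv (swK x y) (sw_auto E) H).
have mS1 : forall z, (z \in S1) = (sw x y z \in S).
  by move=> z; rewrite /S1 (can2_imset_pre _ (swK x y) (swK x y)) inE.
have xy : x != y by apply: contraNneq yS => <-.
have -> : (S :\: C) :|: P = (S1 :\: C) :|: P.
  apply/setP => z; rewrite !inE mS1 /sw.
  case: (z =P x) => [->|_]; first by rewrite xC.
  case: (z =P y) => [->|_]; first by rewrite yC.
  by [].
apply: IH => //.
  apply/eqP; rewrite -eqSS -cPS (cardsD1 y (P :\: S)) !inE yP yS /=.
  rewrite eqSS; apply/eqP; apply: eq_card => z; rewrite !inE mS1 /sw.
  case: (z =P x) => [->|/eqP zx]; first by rewrite (negbTE xP) !andbF.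
  case: (z =P y) => [->|/eqP zy]; first by rewrite xS.
  by [].
rewrite cP; have -> : S1 :&: C = sw x y @^-1: (S :&: C).
  apply/setP => z; rewrite !inE mS1; congr andb; rewrite /sw.
  case: (z =P x) => [->|_]; first by rewrite xC yC.
  case: (z =P y) => [->|_]; first by rewrite xC yC.
  by [].
by rewrite card_preimset //; exact: inv_inj (swK x y).
Qed.

Lemma class_swapP C (hC : forall x y, x \in C -> y \in C -> cnbh e x = cnbh e y) S P :
  P \subset C -> #|P| = #|S :&: C| -> mimv e S -> mimv e ((S :\: C) :|: P).
Proof. by move=> *; apply: (@class_swap C hC #|P :\: S|). Qed.

Lemma clique_bound (K : {set T}) S : (forall x y, x \in K -> y \in K -> x != y -> e x y) ->
  oneReg e S -> #|S :&: K| <= 2.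
Proof.
move=> HK R.
case: (set_0Vmem (S :&: K)) => [->|[x]]; first by rewrite cards0.
move=> xSK; rewrite (cardsD1 x) xSK add1n ltnS.
have /forall_inP R' := R; move: xSK; rewrite inE => /andP [xS xK].
rewrite -(eqP (R' x xS)); apply: subset_leq_card; apply/subsetP => z.
rewrite !inE => /andP [zx /andP [zS zK]]; rewrite zS andbT.
by apply: HK; rewrite // eq_sym.
Qed.

Lemma agree_mimv (e' : rel T) D S : (forall a b, a \notin D -> b \notin D -> e a b = e' a b) ->
  [disjoint S & D] -> D \subset cl e S -> D \subset cl e' S -> mimv e S -> mimv e' S.
Proof.
move=> hag dis D1 D2 /andP [/forall_inP R /maxlP M].
have SD : forall x, x \in S -> x \notin D by by move=> x xS; rewrite (disjointFr dis xS).
have Ecl : cl e S = cl e' S.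
  apply/setP => y; case yD: (y \in D).
    by rewrite (subsetP D1 y yD) (subsetP D2 y yD).
  rewrite !in_cl; apply: eq_existsb => x; case xS: (x \in S) => //=.
  by rewrite hag ?yD //; apply: SD.
apply/andP; split.
  apply/forall_inP => x xS; rewrite -(eqP (R x xS)); apply/eqP; apply: eq_card => z.
  rewrite !inE; case zS: (z \in S); rewrite ?andbF ?andbT //.
  by rewrite hag //; apply: SD.
apply/maxlP => a b eab; rewrite -Ecl => ha hb.
have aD : a \notin D by apply: contra ha; rewrite Ecl; apply: (subsetP D2).
have bD : b \notin D by apply: contra hb; rewrite Ecl; apply: (subsetP D2).
by apply: (M a b) => //; rewrite hag.
Qed.

End Swap.

Section Twin.
Variable T : finType.
Variable e : rel T.
Hypothesis esym : symmetric e.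
Hypothesis eirr : irreflexive e.
Variables (A : {set T}) (v : T).
Hypothesis Av : A \subset cnbh e v.

Definition tt (L : {set T}) x y :=
  if x \in L then (y != x) && (y \in cnbh e v)
  else if y \in L then (x != y) && (x \in cnbh e v) else e x y.

Lemma tt0 x y : tt set0 x y = e x y.
Proof. by rewrite /tt !inE. Qed.

Lemma in_cnbh (r : rel T) a z : (z \in cnbh r a) = (z == a) || r a z.
Proof. by rewrite !inE. Qed.

Lemma cnbhv_v : v \in cnbh e v.
Proof. by rewrite !inE eqxx. Qed.

Lemma step_f (r : rel T) L w : (forall x y, r x y = tt L x y) -> L \subset A ->
  w \in A -> w \notin L -> forall y,
  (if y \in nbh r w :\: cnbh r v then false
   else if y \in nbh r v :\: cnbh r w then true else r w y) =
  (y != w) && (y \in cnbh e v).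
Proof.
move=> Hr LA wA wL y.
have wv : w \in cnbh e v by apply: (subsetP Av).
have Fv : forall z, (z \in cnbh r v) = (z \in cnbh e v).
  move=> z; rewrite [LHS]in_cnbh Hr /tt.
  case: (z =P v) => [->|/eqP zv] //=; first by rewrite cnbhv_v.
  case vL: (v \in L) => //.
  case zL: (z \in L); last by rewrite in_cnbh ?(negbTE zv).
  rewrite cnbhv_v andbT eq_sym ?zv.
  by symmetry; apply/(subsetP Av)/(subsetP LA).
have Fww : r w w = false by rewrite Hr /tt (negbTE wL) eirr.
have Fwv : w != v -> r w v.
  move=> wnv; rewrite Hr /tt (negbTE wL).
  case: (v \in L); first by rewrite wnv wv.
  by move: wv; rewrite in_cnbh (negbTE wnv) /= esym.
have Fvy : forall z, r v z -> z \in cnbh e v.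
  by move=> z rvz; rewrite -Fv !inE rvz orbT.
rewrite inE [y \in nbh r v :\: _]inE -(Fv y) !inE.
have Frvv : r v v = false.
  by rewrite Hr /tt; case: (v \in L) => /=; [rewrite eqxx | rewrite eirr].
case: (y =P w) => [->|/eqP yw]; first by rewrite Fww /= andbF.
rewrite /=.
case: (y =P v) => [yv|/eqP yv].
  subst y; rewrite /= Frvv /= Fwv //; by rewrite eq_sym.
rewrite /=.
by case: (r v y); case: (r w y).
Qed.

Lemma step_tt (r : rel T) L w : (forall x y, r x y = tt L x y) -> L \subset A ->
  w \in A -> w \notin L -> forall x y, make_twin r w v x y = tt (w |: L) x y.
Proof.
move=> Hr LA wA wL x y; rewrite /make_twin /=.
have F := step_f Hr LA wA wL.
case: (x =P w) => [->|/eqP xw].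
  by rewrite F /tt !inE eqxx.
case: (y =P w) => [->|/eqP yw].
  rewrite F /tt !inE (negbTE xw) /= eqxx /=.
  case xL: (x \in L) => //.
  have xv : x \in cnbh e v by apply: (subsetP Av); apply: (subsetP LA).
  have wv : w \in cnbh e v by apply: (subsetP Av).
  by move: xv wv; rewrite !inE => -> ->; rewrite andbT eq_sym.
by rewrite Hr /tt !inE (negbTE xw) (negbTE yw).
Qed.

Lemma fold_tt (l : seq T) : forall (L : {set T}) (r : rel T), uniq l ->
  (forall w, w \in l -> (w \in A) && (w \notin L)) -> L \subset A ->
  (forall x y, r x y = tt L x y) ->
  forall x y, foldl (fun r w => make_twin r w v) r l x y = tt (L :|: [set w in l]) x y.
Proof.
elim: l => [|w l IH] L r /=.
  move=> _ _ _ Hr x y; rewrite Hr; congr tt; apply/setP => z; rewrite !inE orbF //.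
move=> /andP [wl ul] Hl LA Hr x y.
have /andP [wA wL] := Hl w (mem_head _ _).
rewrite (IH (w |: L)) //.
- congr tt; apply/setP => z; rewrite !inE; by case: (z == w); rewrite ?orbT //= orbC.
- move=> z zl; have /andP [-> zL] : (z \in A) && (z \notin L) by apply: Hl; rewrite inE zl orbT.
  rewrite !inE negb_or zL andbT; apply: contraNneq wl => <- //.
- by rewrite subUset sub1set wA LA.
- exact: step_tt.
Qed.

Lemma twin_to_tt x y : twin_to e A v x y = tt A x y.
Proof.
rewrite /twin_to (@fold_tt (enum A) set0) ?enum_uniq //.
- congr tt; apply/setP => z; rewrite !inE mem_enum //.
- by move=> w; rewrite mem_enum inE andbT.
- exact: sub0set.
- by move=> *; rewrite tt0.
Qed.

End Twin.

Section Count.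
Variable T : finType.
Implicit Types (X Y : {set {set T}}) (D : {set T}).

Definition join X Y : {set {set T}} := [set P :|: R | P in X, R in Y].

Lemma card_join_le X Y : #|join X Y| <= #|X| * #|Y|.
Proof.
rewrite /join curry_imset2X; apply: leq_trans (leq_imset_card _ _) _.
by rewrite cardsX.
Qed.

Lemma card_join_eq D X Y : (forall P, P \in X -> P \subset D) ->
  (forall R, R \in Y -> [disjoint R & D]) -> #|join X Y| = #|X| * #|Y|.
Proof.
move=> HX HY; rewrite /join curry_imset2X card_in_imset ?cardsX //.
move=> [P1 R1] [P2 R2]; rewrite !inE /= => /andP [P1X R1Y] /andP [P2X R2Y] E.
have key : forall P R, P \in X -> R \in Y -> (P :|: R) :&: D = P /\ (P :|: R) :\: D = R.
  move=> P R PX RY; have hD := subsetP (HX P PX); have hR := disjointFr (HY R RY).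
  split; apply/setP => z; rewrite !inE; move: (hD z) (hR z);
  case: (z \in P); case: (z \in R); case: (z \in D) => //= h1 h2; first [by move: (h1 isT) | by move: (h2 isT)].
have [E1 E2] := key P1 R1 P1X R1Y; have [E3 E4] := key P2 R2 P2X R2Y.
by congr pair; [rewrite -E1 -E3 E | rewrite -E2 -E4 E].
Qed.

Definition ksub D k : {set {set T}} := [set P : {set T} | (P \subset D) && (#|P| == k)].

Lemma card_ksub D k : #|ksub D k| = 'C(#|D|, k).
Proof. by rewrite -cards_draws. Qed.

Lemma cardU_le (A B : {set {set T}}) : #|A :|: B| <= #|A| + #|B|.
Proof. by rewrite cardsU leq_subr. Qed.

End Count.

Section Defs2.
Variable T : finType.
Definition E (e : rel T) (A B : {set T}) i j : {set {set T}} :=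
  [set S in MIMV e | (#|S :&: A| == i) && (#|S :&: B| == j)].
Definition Z (e : rel T) (A B : {set T}) i j : {set {set T}} :=
  [set S :\: (A :|: B) | S in E e A B i j].
Definition F (e : rel T) (C : {set T}) k : {set {set T}} :=
  [set S in MIMV e | #|S :&: C| == k].
Definition Y (e : rel T) (C : {set T}) k : {set {set T}} :=
  [set S :\: C | S in F e C k].

Lemma Z_swap e A B i j : Z e B A j i = Z e A B i j.
Proof.
rewrite /Z setUC; have -> // : E e B A j i = E e A B i j.
by apply/setP => S; rewrite !inE [(_ == j) && _]andbC.
Qed.
End Defs2.

Lemma disjP (T : finType) (S X : {set T}) : reflect (forall x, x \in S -> x \notin X) [disjoint S & X].
Proof.
apply: (iffP pred0P) => H x.
  by move=> xS; apply/negP => xX; have := H x; rewrite /= xS xX.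
by rewrite /=; case xS: (x \in S); rewrite //= (negbTE (H x xS)).
Qed.

Section Main.
Variable T : finType.
Variable e : rel T.
Hypothesis esym : symmetric e.
Hypothesis eirr : irreflexive e.
Variables u v : T.
Hypothesis huv : e u v.
Hypothesis ntw : cnbh e u != cnbh e v.
Hypothesis hyp_u : forall S, S \in MIMV e -> [disjoint S & cnbh e v] -> [disjoint S & nbh e u].
Hypothesis hyp_v : forall S, S \in MIMV e -> [disjoint S & cnbh e u] -> [disjoint S & nbh e v].

Local Notation A := (twins e u).
Local Notation B := (twins e v).
Local Notation C := (twins e u :|: twins e v).
Local Notation e1 := (twin_to e (twins e u) v).

Lemma inT w x : (x \in twins e w) = (cnbh e x == cnbh e w).
Proof. by rewrite inE. Qed.

Lemma selfT w : w \in twins e w.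
Proof. by rewrite inT. Qed.

Lemma cnbh_self w : w \in cnbh e w.
Proof. by rewrite !inE eqxx. Qed.

Lemma adj_cnbh x y : e x y -> y \in cnbh e x.
Proof. by rewrite !inE => ->; rewrite orbT. Qed.

Lemma cnbh_sym x y : (y \in cnbh e x) = (x \in cnbh e y).
Proof. by rewrite !inE eq_sym esym. Qed.

Lemma AB : [disjoint A & B].
Proof.
apply/pred0P => x /=; apply/negP => /andP []; rewrite !inT => /eqP -> /eqP E.
by move: ntw; rewrite E eqxx.
Qed.

Lemma uv_ne : u != v.
Proof. by apply: contraTneq huv => ->; rewrite eirr. Qed.

Lemma vnA : v \notin A.
Proof. by rewrite inT eq_sym. Qed.

Lemma unB : u \notin B.
Proof. by rewrite inT. Qed.

Lemma C_cnbh x : x \in C -> (x \in cnbh e u) && (x \in cnbh e v).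
Proof.
have vu : v \in cnbh e u by apply: adj_cnbh.
have uv : u \in cnbh e v by apply: adj_cnbh; rewrite esym.
rewrite inE !inT => /orP [] /eqP E.
  by rewrite -E cnbh_self cnbh_sym E vu.
by rewrite -E cnbh_self andbT cnbh_sym E uv.
Qed.

Lemma Csub_u : C \subset cnbh e u.
Proof. by apply/subsetP => x /C_cnbh /andP []. Qed.
Lemma Csub_v : C \subset cnbh e v.
Proof. by apply/subsetP => x /C_cnbh /andP []. Qed.
Lemma Asub_v : A \subset cnbh e v.
Proof. by apply: subset_trans Csub_v; apply: subsetUl. Qed.

Lemma C_clique x y : x \in C -> y \in C -> x != y -> e x y.
Proof.
move=> xC yC xy; have /andP [yu yv] := C_cnbh yC.
move: xC; rewrite inE !inT => /orP [] /eqP E.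
  by move: yu; rewrite -E !inE eq_sym (negbTE xy).
by move: yv; rewrite -E !inE eq_sym (negbTE xy).
Qed.

Lemma cardC : #|C| = #|A| + #|B|.
Proof. by rewrite cardsU (disjoint_setI0 AB) cards0 subn0. Qed.

Lemma e1E x y : e1 x y = tt e v A x y.
Proof. exact: (twin_to_tt esym eirr Asub_v). Qed.

Lemma e1_off x y : x \notin A -> y \notin A -> e1 x y = e x y.
Proof. by move=> xA yA; rewrite e1E /tt (negbTE xA) (negbTE yA). Qed.

Lemma e1_A x y : x \in A -> e1 x y = (y != x) && (y \in cnbh e v).
Proof. by move=> xA; rewrite e1E /tt xA. Qed.

Lemma e1_sym : symmetric e1.
Proof.
move=> x y; rewrite !e1E /tt.
case xA: (x \in A); case yA: (y \in A) => //=; try exact: esym.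
have xv : x \in cnbh e v by apply: (subsetP Asub_v).
have yv : y \in cnbh e v by apply: (subsetP Asub_v).
by rewrite xv yv eq_sym.
Qed.

Lemma e1_irr : irreflexive e1.
Proof. by move=> x; rewrite e1E /tt; case: (x \in A); rewrite ?eqxx ?eirr. Qed.

Lemma e1_cnbh c : c \in C -> cnbh e1 c = cnbh e v.
Proof.
move=> cC; apply/setP => y; rewrite [LHS]in_cnbh.
case cA: (c \in A).
  rewrite e1_A //; have cv : c \in cnbh e v by apply: (subsetP Asub_v).
  by case: (y =P c) => [->|] //=.
have cB : c \in B by move: cC; rewrite inE cA.
have Ec : cnbh e c = cnbh e v by move: cB; rewrite inT => /eqP.
case yA: (y \in A).
  rewrite e1_sym e1_A // (subsetP Asub_v y yA) (subsetP Csub_v c cC) andbT eq_sym.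
  by case: (c == y).
by rewrite e1_off ?cA ?yA // -in_cnbh Ec.
Qed.

Lemma e1_twins x y : x \in C -> y \in C -> cnbh e1 x = cnbh e1 y.
Proof. by move=> xC yC; rewrite !e1_cnbh. Qed.

Lemma E_card i j : #|E e A B i j| <= 'C(#|A|, i) * ('C(#|B|, j) * #|Z e A B i j|).
Proof.
have sub : E e A B i j \subset join (ksub A i) (join (ksub B j) (Z e A B i j)).
  apply/subsetP => S SE; have := SE; rewrite inE => /andP [SM /andP [hi hj]].
  apply/imset2P; exists (S :&: A) ((S :&: B) :|: (S :\: (A :|: B))).
  - by rewrite inE subsetIr hi.
  - apply/imset2P; exists (S :&: B) (S :\: (A :|: B)) => //.
    + by rewrite inE subsetIr hj.
    + by apply: imset_f.
  - apply/setP => z; rewrite !(in_setU, in_setI, in_setD).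
    by case: (z \in S); case: (z \in A); case: (z \in B).
apply: leq_trans (subset_leq_card sub) _.
apply: leq_trans (card_join_le _ _) _; rewrite card_ksub leq_mul2l.
by rewrite (leq_trans (card_join_le _ _)) ?orbT // card_ksub.
Qed.

Lemma SC_card S : #|S :&: C| = #|S :&: A| + #|S :&: B|.
Proof.
rewrite setIUr cardsU; have -> : S :&: A :&: (S :&: B) = set0.
  apply/setP => z; rewrite !(in_setI, in_set0); case zA: (z \in A); rewrite ?andbF //.
  by rewrite (disjointFr AB zA) !andbF.
by rewrite cards0 subn0.
Qed.

Lemma G_upper : #|MIMV e| <= #|Z e A B 0 0| + #|A| * #|Z e A B 1 0|
  + 'C(#|A|, 2) * #|Z e A B 2 0| + #|B| * #|Z e A B 0 1|
  + 'C(#|B|, 2) * #|Z e A B 0 2| + #|A| * #|B| * #|Z e A B 1 1|.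
Proof.
set U := E e A B 0 0 :|: E e A B 1 0 :|: E e A B 2 0 :|: E e A B 0 1 :|: E e A B 0 2
   :|: E e A B 1 1.
have sub : MIMV e \subset U.
  apply/subsetP => S SM.
  have : #|S :&: A| + #|S :&: B| <= 2.
    rewrite -SC_card; apply: (@clique_bound T e C S).
      by move=> x y xC yC; apply: C_clique.
    by move: SM; rewrite inE => /andP [].
  have SM' : mimv e S by move: SM; rewrite inE.
  rewrite /U !in_setU /E !in_set SM' /=.
  case: #|S :&: A| => [|[|[|i]]]; case: #|S :&: B| => [|[|[|j]]] //=;
  by rewrite ?addnS ?addSn.
apply: leq_trans (subset_leq_card sub) _.
have h00 : #|E e A B 0 0| <= #|Z e A B 0 0| by have := E_card 0 0; rewrite !bin0 !mul1n.
have h10 : #|E e A B 1 0| <= #|A| * #|Z e A B 1 0| by have := E_card 1 0; rewrite bin0 bin1 mul1n.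
have h20 : #|E e A B 2 0| <= 'C(#|A|, 2) * #|Z e A B 2 0| by have := E_card 2 0; rewrite bin0 mul1n.
have h01 : #|E e A B 0 1| <= #|B| * #|Z e A B 0 1| by have := E_card 0 1; rewrite bin0 bin1 mul1n.
have h02 : #|E e A B 0 2| <= 'C(#|B|, 2) * #|Z e A B 0 2| by have := E_card 0 2; rewrite bin0 mul1n.
have h11 : #|E e A B 1 1| <= #|A| * #|B| * #|Z e A B 1 1| by have := E_card 1 1; rewrite !bin1 mulnA.
rewrite /U.
apply: leq_trans (cardU_le _ _) (leq_add _ h11).
apply: leq_trans (cardU_le _ _) (leq_add _ h02).
apply: leq_trans (cardU_le _ _) (leq_add _ h01).
apply: leq_trans (cardU_le _ _) (leq_add _ h20).
exact: leq_trans (cardU_le _ _) (leq_add h00 h10).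
Qed.

Lemma cardU_disj (T' : finType) (X1 X2 : {set T'}) : [disjoint X1 & X2] -> #|X1 :|: X2| = #|X1| + #|X2|.
Proof. by move=> d; rewrite cardsU (disjoint_setI0 d) cards0 subn0. Qed.

Lemma F_card k : 'C(#|C|, k) * #|Y e1 C k| <= #|F e1 C k|.
Proof.
rewrite -card_ksub -(@card_join_eq _ C).
- apply: subset_leq_card; apply/subsetP => X /imset2P [P R].
  rewrite inE => /andP [PC /eqP cP] /imsetP [S SF ->] ->.
  move: SF; rewrite inE => /andP [SM /eqP cS].
  rewrite inE setUC; apply/andP; split.
    rewrite inE; apply: (class_swapP e1_sym e1_irr e1_twins) => //.
      by rewrite cP cS.
    by move: SM; rewrite inE.
  have -> : (S :\: C :|: P) :&: C = P.
    apply/setP => z; rewrite in_setI [z \in _ :|: P]in_setU in_setD.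
    case zC: (z \in C); rewrite ?andbF ?andbT /= ?orbF //.
    by symmetry; apply/negbTE; apply: contraFN zC; apply: (subsetP PC).
  by rewrite cP.
- by move=> P; rewrite inE => /andP [].
- move=> R /imsetP [S _ ->]; apply/pred0P => z /=.
  by rewrite in_setD; case: (z \in C); rewrite ?andbF.
Qed.

Lemma G1_lower : #|Y e1 C 0| + #|C| * #|Y e1 C 1| + 'C(#|C|, 2) * #|Y e1 C 2| <= #|MIMV e1|.
Proof.
have h0 := F_card 0; have h1 := F_card 1; have h2 := F_card 2.
rewrite bin0 mul1n in h0; rewrite bin1 in h1.
have dis : forall i j, i != j -> [disjoint F e1 C i & F e1 C j].
  move=> i j ij; apply/pred0P => S /=; rewrite !inE.
  case: (#|S :&: C| =P i) => [->|]; rewrite ?andbF //.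
  by rewrite (negbTE ij) !andbF.
apply: leq_trans (leq_add (leq_add h0 h1) h2) _.
rewrite -cardU_disj ?dis // -cardU_disj; last first.
  apply/pred0P => S /=; rewrite !inE.
  by case: #|S :&: C| => [|[|[|n]]]; rewrite ?andbF ?andbT ?orbF.
apply: subset_leq_card; apply/subsetP => S; rewrite !inE.
by case/orP => [/orP []|] /andP [].
Qed.

Lemma key_dom S : S \in MIMV e -> [disjoint S & A] ->
  (exists2 s, s \in S & e u s) /\ (exists2 s, s \in S & s \in cnbh e v).
Proof.
move=> SM dis; have SM' : mimv e S by move: SM; rewrite inE.
move: (SM') => /andP [R /maxlP Mx].
have uS : u \notin S by apply/negP => uS; move: (disjointFr dis uS); rewrite selfT.
have p2 : exists2 s, s \in S & s \in cnbh e v.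
  case: (boolP [exists s in S, s \in cnbh e v]) => [/exists_inP [s ? ?]|]; first by exists s.
  move=> H; exfalso.
  have d1 : [disjoint S & cnbh e v].
    by apply/disjP => s sS; apply/negP => sv; move/negP: H; apply; apply/exists_inP; exists s.
  have /disjP d2 := hyp_u SM d1; move/disjP: d1 => d1.
  apply: (Mx u v huv).
    apply/not_clP; split => // s sS; rewrite esym.
    by have := d2 s sS; rewrite inE.
  apply/not_clP; split; first by apply/negP => vS; have := d1 v vS; rewrite cnbh_self.
  by move=> s sS; apply/negP => esv; have := d1 s sS; rewrite cnbh_sym adj_cnbh.
split => //.
case: (boolP [exists s in S, e u s]) => [/exists_inP [s ? ?]|]; first by exists s.
move=> H; exfalso.
have d1 : [disjoint S & cnbh e u].
  apply/disjP => s sS; rewrite inE in_set1 negb_or inE; apply/andP; split.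
    by apply: contraNneq uS => <-.
  by apply/negP => eus; move/negP: H; apply; apply/exists_inP; exists s.
have /disjP d2 := hyp_v SM d1.
have [s sS sv] := p2.
have svv : s != v.
  apply: contraTneq sS => ->; apply/negP => vS.
  by have /disjP := d1; move/(_ v vS); rewrite adj_cnbh.
have := d2 s sS; rewrite inE.
by move: sv; rewrite inE in_set1 (negbTE svv) /= inE => ->.
Qed.

Lemma Z0_sub j : Z e A B 0 j \subset Y e1 C j.
Proof.
apply/subsetP => R /imsetP [S SE ->]; apply: imset_f.
move: SE; rewrite inE => /andP [SM /andP [/eqP h0 /eqP hj]].
have dis : [disjoint S & A] by rewrite -setI_eq0 -cards_eq0 h0.
have [[s1 s1S es1] [s2 s2S s2v]] := key_dom SM dis.
rewrite inE SC_card h0 hj eqxx andbT inE.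
apply: (@agree_mimv T e e1 A) => //.
- by move=> a b aA bA; rewrite e1_off.
- apply/subsetP => a aA; apply: (cl_adj s1S); rewrite esym.
  have s1A : s1 \notin A by rewrite (disjointFr dis s1S).
  have : s1 \in cnbh e a by move: aA; rewrite inT => /eqP ->; apply: adj_cnbh.
  rewrite inE in_set1 inE => /orP [/eqP E|//]; by rewrite E aA in s1A.
- apply/subsetP => a aA; apply: (cl_adj s2S); rewrite e1_sym e1_A // s2v andbT.
  by apply: contraTneq aA => <-; rewrite (disjointFr dis s2S).
- by move: SM; rewrite inE.
Qed.

Local Notation W4 := (~: (cnbh e u :|: cnbh e v)).

Lemma inW4 x : (x \in W4) = (x \notin cnbh e u) && (x \notin cnbh e v).
Proof. by rewrite in_setC in_setU negb_or. Qed.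

Lemma Cfar x y : x \in C -> y \notin cnbh e u -> y \notin cnbh e v -> ~~ e x y.
Proof.
move=> xC yu yv; apply/negP => exy.
have yx : y \in cnbh e x by apply: adj_cnbh.
move: xC; rewrite in_setU !inT => /orP [] /eqP E; rewrite E in yx.
  by rewrite yx in yu.
by rewrite yx in yv.
Qed.

Lemma Z11_props R : R \in Z e A B 1 1 -> [/\ R \subset W4, oneReg e R &
  forall x y, e x y -> x \in W4 -> y \in W4 -> x \notin cl e R -> y \notin cl e R -> False].
Proof.
move=> /imsetP [S SE ->]; move: SE; rewrite inE => /andP [SM /andP [hA hB]].
have SM' : mimv e S by move: SM; rewrite inE.
move: (SM') => /andP [RS /maxlP Mx].
have [a Ea] := cards1P hA; have [b Eb] := cards1P hB.
have : a \in S :&: A by rewrite Ea set11.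
rewrite in_setI => /andP [aS aA].
have : b \in S :&: B by rewrite Eb set11.
rewrite in_setI => /andP [bS bB].
have aC : a \in C by rewrite in_setU aA.
have bC : b \in C by rewrite in_setU bB orbT.
have ab : a != b by apply: contraTneq bB => <-; rewrite (disjointFr AB aA).
have eab : e a b by apply: C_clique.
have SC : forall z, z \in S -> z \in C -> (z == a) || (z == b).
  move=> z zS; rewrite in_setU => /orP [zA|zB].
    have : z \in S :&: A by rewrite in_setI zS zA.
    by rewrite Ea in_set1 => ->.
  have : z \in S :&: B by rewrite in_setI zS zB.
  by rewrite Eb in_set1 => ->; rewrite orbT.
have eba : e b a by rewrite esym.
have nar : forall r, r \in S -> r \notin C -> ~~ e a r.
  move=> r rS rC; apply/negP => ear.
  by have := oneReg_uniq RS aS rS bS ear eab => rb; rewrite rb bC in rC.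
have nbr : forall r, r \in S -> r \notin C -> ~~ e b r.
  move=> r rS rC; apply/negP => ebr.
  by have := oneReg_uniq RS bS rS aS ebr eba => ra; rewrite ra aC in rC.
have Ca : cnbh e a = cnbh e u by move: aA; rewrite inT => /eqP.
have Cb : cnbh e b = cnbh e v by move: bB; rewrite inT => /eqP.
have Wr : forall r, r \in S -> r \notin C -> r \in W4.
  move=> r rS rC; rewrite inW4 -Ca -Cb !in_cnbh !negb_or (nar r rS rC) (nbr r rS rC) !andbT.
  by apply/andP; split; apply: contraNneq rC => ->.
have WC : forall x, x \in W4 -> x \notin C.
  move=> x; rewrite inW4 => /andP [xu _]; apply: contra xu; apply: (subsetP Csub_u).
have ncl : forall x, x \in W4 -> x \notin cl e (S :\: C) -> x \notin cl e S.
  move=> x xW /not_clP [xR hR]; apply/not_clP; split.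
    by apply: contra xR => xS; rewrite in_setD xS WC.
  move=> z zS; case zC: (z \in C).
    by move: xW; rewrite inW4 => /andP [xu xv]; apply: Cfar.
  by apply: hR; rewrite in_setD zS zC.
split.
- by apply/subsetP => r; rewrite in_setD => /andP [rC rS]; exact: Wr.
- apply/oneRegP => r; rewrite in_setD => /andP [rC rS].
  have /oneRegP/(_ r rS) [y yS [ery U]] := RS.
  have yC : y \notin C.
    apply/negP => yC; have := SC y yS yC; case/orP => /eqP E; subst y.
      by move: (nar r rS rC); rewrite esym ery.
    by move: (nbr r rS rC); rewrite esym ery.
  exists y; first by rewrite in_setD yC yS.
  split => // z; rewrite in_setD => /andP [_ zS]; exact: U.
- move=> x y exy xW yW hx hy; apply: (Mx x y exy); exact: ncl.
Qed.

Definition Pext (R X : {set T}) := [&& R \subset X, X \subset ~: cnbh e v & oneReg e X].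
Definition fext (R : {set T}) : {set T} :=
  if [pick X | maxset (Pext R) X] is Some X then X else R.

Lemma fext_props R : R \in Z e A B 1 1 -> [/\ R \subset fext R, fext R \subset ~: cnbh e v,
  oneReg e (fext R) & forall x y, e x y -> x \notin cnbh e v -> y \notin cnbh e v ->
    x \notin cl e (fext R) -> y \notin cl e (fext R) -> False].
Proof.
move=> RZ; have [RW RR RM] := Z11_props RZ.
have PR : Pext R R.
  rewrite /Pext subxx RR andbT /=; apply: (subset_trans RW).
  by apply/subsetP => x; rewrite inW4 in_setC => /andP [].
rewrite /fext; case: pickP => [X HX | none]; last first.
  by have [X HX _] := maxset_exists PR; move: (none X); rewrite HX.
move/maxsetP: HX => [/and3P [RX XN XR] Hmax]; split => //.
move=> x y exy xv yv hx hy.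
have XX : X \subset x |: (y |: X) by apply/subsetP => z zX; rewrite !in_setU zX !orbT.
have P' : Pext R (x |: (y |: X)).
  rewrite /Pext (subset_trans RX XX) /= (oneReg_add esym eirr XR exy hx hy) andbT.
  apply/subsetP => z; rewrite !in_setU !in_set1 => /orP [/eqP ->|/orP [/eqP ->|zX]];
  rewrite ?in_setC //; first by rewrite -in_setC (subsetP XN).
have E := Hmax _ P' XX.
have : x \in X by rewrite -E in_setU set11.
by move=> xX; move: hx; rewrite (cl_mem e xX).
Qed.

Lemma oneReg_agree (e' : rel T) (X : {set T}) : (forall x y, x \in X -> y \in X -> e x y = e' x y) ->
  oneReg e X -> oneReg e' X.
Proof.
move=> H /oneRegP R; apply/oneRegP => x xX; have [y yX [exy U]] := R x xX.
exists y => //; split; first by rewrite -H.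
by move=> z zX; rewrite -H //; apply: U.
Qed.

Lemma fext_Y R : R \in Z e A B 1 1 -> fext R \in Y e1 C 2.
Proof.
move=> RZ; have [RX XN XR XM] := fext_props RZ.
set X := fext R in RX XN XR XM *.
have Xv : forall x, x \in X -> x \notin cnbh e v.
  by move=> x xX; have := subsetP XN x xX; rewrite in_setC.
have XC : forall x, x \in X -> x \notin C.
  by move=> x xX; apply: contra (Xv x xX); apply: (subsetP Csub_v).
have XA : forall x, x \in X -> x \notin A.
  by move=> x xX; apply: contra (XC x xX); rewrite in_setU => ->.
have uC : u \in C by rewrite in_setU selfT.
have vC : v \in C by rewrite in_setU selfT orbT.
have uA : u \in A by rewrite selfT.
have mS : forall z, (z \in u |: (v |: X)) = [|| z == u, z == v | z \in X].
  by move=> z; rewrite !in_setU !in_set1.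
apply/imsetP; exists (u |: (v |: X)); last first.
  apply/setP => z; rewrite in_setD mS.
  case: (z =P u) => [->|_]; first by rewrite uC /=; apply/negbTE/negP => uX; move: (XC u uX); rewrite uC.
  case: (z =P v) => [->|_]; first by rewrite vC /=; apply/negbTE/negP => vX; move: (XC v vX); rewrite vC.
  by case zX: (z \in X); rewrite ?(XC z zX) //= andbF.
rewrite inE; apply/andP; split; last first.
  have -> : (u |: (v |: X)) :&: C = [set u; v].
    apply/setP => z; rewrite in_setI mS in_set2.
    case: (z =P u) => [->|_]; first by rewrite uC.
    case: (z =P v) => [->|_]; first by rewrite vC.
    by case zX: (z \in X); rewrite ?(negbTE (XC z zX)).
  by rewrite cards2 uv_ne.
rewrite inE; apply/andP; split.
  apply: (oneReg_add e1_sym e1_irr).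
  - apply: (oneReg_agree _ XR) => x y xX yX; rewrite e1_off //; exact: XA.
  - by rewrite e1_A // cnbh_self eq_sym uv_ne.
  - apply/not_clP; split; first by apply/negP => uX; move: (XC u uX); rewrite uC.
    by move=> x xX; rewrite e1_sym e1_A // (negbTE (Xv x xX)) andbF.
  - apply/not_clP; split; first by apply/negP => vX; move: (XC v vX); rewrite vC.
    move=> x xX; rewrite e1_off ?(XA x xX) ?vnA //; apply/negP => exv.
    by move: (Xv x xX); rewrite cnbh_sym adj_cnbh.
apply/maxlP => x y exy hx hy.
have uS : u \in u |: (v |: X) by rewrite in_setU set11.
have fv : forall z, z \notin cl e1 (u |: (v |: X)) -> z \notin cnbh e v.
  move=> z hz; apply/negP => zv; move/negP: hz; apply.
  case: (z =P u) => [->|/eqP zu]; first by apply: cl_mem.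
  by apply: (cl_adj uS); rewrite e1_A // zv andbT.
have fA : forall z, z \notin cl e1 (u |: (v |: X)) -> z \notin A.
  by move=> z hz; apply: contra (fv z hz); apply: (subsetP Asub_v).
have fX : forall z, z \notin cl e1 (u |: (v |: X)) -> z \notin cl e X.
  move=> z /not_clP [zS H]; apply/not_clP; split.
    by apply: contra zS => zX; rewrite !in_setU zX !orbT.
  move=> s sX; rewrite -e1_off ?(XA s sX) ?(fA z) //; first apply: H.
    by rewrite !in_setU sX !orbT.
  by apply/not_clP; split.
apply: (XM x y); rewrite -?e1_off ?fv ?fX ?fA //.
Qed.

Definition recv (X : {set T}) : {set T} :=
  [set x in X | (x \notin cnbh e u) && [forall y in X, e x y ==> (y \notin cnbh e u)]].

Lemma rec_fext R : R \in Z e A B 1 1 -> recv (fext R) = R.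
Proof.
move=> RZ; have [RW RR RM] := Z11_props RZ; have [RX XN XR XM] := fext_props RZ.
set X := fext R in RX XN XR XM *.
have Xv : forall x, x \in X -> x \notin cnbh e v.
  by move=> x xX; have := subsetP XN x xX; rewrite in_setC.
apply/setP => x; rewrite in_set; apply/idP/idP.
  move=> /andP [xX /andP [xu /forall_inP H]]; case xR: (x \in R) => //; exfalso.
  have [y yX exy] := oneReg_ex XR xX.
  have yu := implyP (H y yX) exy.
  have yR : y \notin R.
    apply/negP => yR; have [z zR eyz] := oneReg_ex RR yR.
    have := oneReg_uniq XR yX xX (subsetP RX z zR); rewrite esym => /(_ exy eyz) xz.
    by rewrite xz zR in xR.
  have hx := outside_not_cl RR XR RX xX (negbT xR).
  have hy := outside_not_cl RR XR RX yX yR.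
  by apply: (RM x y exy); rewrite // inW4 ?xu ?yu ?Xv.
move=> xR; have xX := subsetP RX x xR.
have := subsetP RW x xR; rewrite inW4 => /andP [xu _].
rewrite xX xu /=; apply/forall_inP => y yX; apply/implyP => exy.
have [z zR exz] := oneReg_ex RR xR.
have := oneReg_uniq XR xX yX (subsetP RX z zR) exy exz => ->.
by have := subsetP RW z zR; rewrite inW4 => /andP [].
Qed.

Lemma Z11_le : #|Z e A B 1 1| <= #|Y e1 C 2|.
Proof.
rewrite -(@card_in_imset _ _ fext (mem (Z e A B 1 1))).
  apply: subset_leq_card; apply/subsetP => X /imsetP [R RZ ->]; exact: fext_Y.
by move=> R1 R2 h1 h2 E; rewrite -(rec_fext h1) E rec_fext.
Qed.

Lemma oriented : exists y0 y1 y2,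
  [/\ y0 + (#|A| + #|B|) * y1 + 'C(#|A| + #|B|, 2) * y2 <= #|MIMV e1|,
      #|Z e A B 0 0| <= y0, #|Z e A B 0 1| <= y1, #|Z e A B 0 2| <= y2
    & #|Z e A B 1 1| <= y2].
Proof.
exists #|Y e1 C 0|, #|Y e1 C 1|, #|Y e1 C 2|; split.
- by rewrite -cardC; apply: G1_lower.
- exact: subset_leq_card (Z0_sub 0).
- exact: subset_leq_card (Z0_sub 1).
- exact: subset_leq_card (Z0_sub 2).
- exact: Z11_le.
Qed.

Lemma G_upper' : #|MIMV e| <= #|Z e A B 0 0| + #|A| * #|Z e A B 1 0|
  + 'C(#|A|, 2) * #|Z e A B 2 0| + #|B| * #|Z e A B 0 1|
  + 'C(#|B|, 2) * #|Z e A B 0 2| + #|A| * #|B| * #|Z e A B 1 1|.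
Proof. by have := hyp_u; have := hyp_v; move=> _ _; apply: G_upper. Qed.

Lemma e1_symirr : symmetric e1 /\ irreflexive e1.
Proof. by have := hyp_u; have := hyp_v; move=> _ _; split; [apply: e1_sym | apply: e1_irr]. Qed.

End Main.

Lemma hyp_conv (T : finType) (e : rel T) (esym : symmetric e) (eirr : irreflexive e)
  (u v : T) (huv : e u v) (W : {set T}) (HW : W = ~: (cnbh e u :|: cnbh e v)) :
  ~ (exists M, M \in MIM e /\
       cover M \subset (nbh e u :\: cnbh e v) :|: W /\
       cover M :&: (nbh e u :\: cnbh e v) != set0) ->
  forall S, S \in MIMV e -> [disjoint S & cnbh e v] -> [disjoint S & nbh e u].
Proof.
move=> H S SM dv; apply/negPn/negP => nd; apply: H.
have [M MM cM] := MIMV_MIM esym eirr SM.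
exists M; split => //; rewrite cM; split.
  apply/subsetP => x xS; have xv := disjointFr dv xS.
  rewrite HW in_setU in_setD in_setC in_setU xv /= orbF.
  case eux: (x \in nbh e u) => //=.
  rewrite /cnbh in_setU1 eux orbF.
  by apply/negP => /eqP xu; move: xv; rewrite xu !inE esym huv orbT.
move: nd; apply: contra => /eqP E; apply/disjP => x xS; apply/negP => xu.
have : x \in S :&: (nbh e u :\: cnbh e v) by rewrite !in_setI in_setD xS xu (disjointFr dv xS).
by rewrite E in_set0.
Qed.

Theorem lemma2p3 (T : finType) (e : rel T) (esym : symmetric e)
  (eirr : irreflexive e) (u v : T) (huv : e u v) :
  (* W1 = N(u)\N[v], W3 = N(v)\N[u], W4 = V \ (N[u] ∪ N[v]) *)
  ~ (exists M, M \in MIM e /\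
       cover M \subset (nbh e u :\: cnbh e v) :|: ~: (cnbh e u :|: cnbh e v) /\
       cover M :&: (nbh e u :\: cnbh e v) != set0) ->
  ~ (exists M, M \in MIM e /\
       cover M \subset (nbh e v :\: cnbh e u) :|: ~: (cnbh e u :|: cnbh e v) /\
       cover M :&: (nbh e v :\: cnbh e u) != set0) ->
  #|MIM e| <= #|MIM (twin_to e (twins e u) v)| \/
  #|MIM e| <= #|MIM (twin_to e (twins e v) u)|.
Proof.
move=> H1 H2.
have hvu : e v u by rewrite esym.
case: (eqVneq (cnbh e u) (cnbh e v)) => [Etw | ntw].
  left.
  have Av : twins e u \subset cnbh e v.
    apply/subsetP => x; rewrite inE => /eqP Ex; rewrite -Etw -Ex !inE eqxx //.
  have -> : twin_to e (twins e u) v = e.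
    apply: functional_extensionality => x; apply: functional_extensionality => y.
    rewrite (twin_to_tt esym eirr Av) /tt.
    case xA: (x \in twins e u).
      move: xA; rewrite inE -Etw => /eqP <-; rewrite !inE.
      by case: (y =P x) => [->|]; rewrite ?eirr.
    case yA: (y \in twins e u) => //.
    move: yA; rewrite inE -Etw => /eqP <-; rewrite !inE esym.
    by case: (x =P y) => [->|]; rewrite ?eirr.
  by [].
have hyp_u := hyp_conv esym eirr huv (erefl _) H1.
have HW : ~: (cnbh e u :|: cnbh e v) = ~: (cnbh e v :|: cnbh e u) by rewrite setUC.
have hyp_v := hyp_conv esym eirr hvu HW H2.
have ntw' : cnbh e v != cnbh e u by rewrite eq_sym.
have [y0 [y1 [y2 [hg1 a0 a1 a2 a3]]]] := oriented esym eirr huv ntw hyp_u hyp_v.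
have [x0 [x1 [x2 [hg2 b0 b1 b2 b3]]]] := oriented esym eirr hvu ntw' hyp_v hyp_u.
have hg := G_upper' esym huv ntw hyp_u hyp_v.
rewrite !(Z_swap e (twins e u) (twins e v)) in b0 b1 b2 b3.
rewrite (addnC #|twins e v|) in hg2.
have [s1 i1] := e1_symirr esym eirr huv hyp_u hyp_v.
have [s2 i2] := e1_symirr esym eirr hvu hyp_v hyp_u.
rewrite (MIM_MIMV esym eirr) (MIM_MIMV s1 i1) (MIM_MIMV s2 i2).
apply: (@arith _ _ _ _ _ _ _ _ _ _ _ _ _ _ _ _ _ _ _ hg hg1 a0 a1 a2 a3 hg2 b0 b1 b2 b3).
  by apply/card_gt0P; exists u; rewrite inE.
by apply/card_gt0P; exists v; rewrite inE.
Qed.
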